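(* Let $\mathbb{F}$ be a field with $\mathrm{char}(\mathbb{F})\neq 2,3$, let $I$ be an ideal of $\hat{\mathcal{H}}$ with $I\subseteq J$, and let $x$ be a non-zero element of $I$ of minimal $J$-degree, with $p$-level $3k$. Then $x=\sum_{j\in 3\mathbb{N},\,j\le 3k}\beta_jp_{\bar1,j}$ for some $\beta_j\in\mathbb{F}$.
   Context: Notation: $\mathbb{N}=\{1,2,3,\dots\}$, $3\mathbb{N}=\{3,6,9,\dots\}$; for $r\in\mathbb{Z}$, $\bar r=r+3\mathbb{Z}\in\mathbb{Z}_3$. The algebra $\hat{\mathcal{H}}$ is the commutative $\mathbb{F}$-algebra with basis $\{a_i:i\in\mathbb{Z}\}\cup\{s_j:j\in\mathbb{N}\}\cup\{p_{\bar r,k}:\bar r\in\{\bar1,\bar2\},\ k\in 3\mathbb{N}\}$, where $s_0=0$, $p_{\bar r,j}=0$ for all $\bar r$ whenever $j\notin 3\mathbb{N}$, $p_{\bar 0,j}=-p_{\bar1,j}-p_{\bar2,j}$, $z_{\bar r,j}=p_{\bar r+\bar1,j}-p_{\bar r-\bar1,j}$, and for $i,i'\in\mathbb{Z}$, $j,l\in\mathbb{N}$, $h,k\in3\mathbb{N}$, $\bar r,\bar t\in\mathbb{Z}_3$: (H1) $a_ia_{i'}=\tfrac12(a_i+a_{i'})+s_{|i-i'|}+z_{\bar\imath,|i-i'|}$; (H2) $a_is_j=-\tfrac34a_i+\tfrac38(a_{i-j}+a_{i+j})+\tfrac32 s_j-z_{\bar\imath,j}$; (H3) $a_ip_{\bar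 r,k}=\tfrac32p_{\bar r,k}-p_{-(\bar\imath+\bar r),k}$; (H4) $s_js_l=\tfrac34(s_j+s_l)-\tfrac38(s_{|j-l|}+s_{j+l})$; (H5) $s_jp_{\bar r,k}=\tfrac34(p_{\bar r,j}+p_{\bar r,k})-\tfrac38(p_{\bar r,|j-k|}+p_{\bar r,j+k})$; (H6) $p_{\bar r,h}p_{\bar t,k}=\tfrac14(z_{-(\bar r+\bar t),h}+z_{-(\bar r+\bar t),k})-\tfrac18(z_{-(\bar r+\bar t),|h-k|}+z_{-(\bar r+\bar t),h+k})$. $J=\langle p_{\bar1,j},p_{\bar2,j}:j\in3\mathbb{N}\rangle$ (an ideal). Every non-zero $x\in J$ is uniquely $x=\sum_{j\in3\mathbb{N},\,j\le 3m}\sum_{\bar r\in\{\bar1,\bar2\}}\beta_{\bar r,j}p_{\bar r,j}$ with $\beta_{\bar r,3m}\neq0$ for some $\bar r$; its $p$-level is $3m$ and its $J$-degree is $3m+\sum_{r\in\{1,2\},\ \beta_{\bar r,3m}\neq0}\tfrac r4$. *)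

(* Defs.v *)
From HB Require Import structures.
From mathcomp Require Import all_boot all_order all_algebra.
From mathcomp Require Import finmap monalg.
Set Implicit Arguments. Unset Strict Implicit. Unset Printing Implicit Defensive.
Import Order.TTheory GRing.Theory Num.Theory.
Local Open Scope ring_scope.

(* Index set of the basis of \hat H:
   inl i                 ~ a_i          (i : int)
   inr (inl n)           ~ s_(n+1)      (j = n+1 in N = {1,2,...})
   inr (inr (false, m))  ~ p_(1bar, 3(m+1))
   inr (inr (true,  m))  ~ p_(2bar, 3(m+1)) *)
Definition Bas : Type := (int + (nat + (bool * nat)))%type.

Definition Hh (F : fieldType) := {malg F[Bas]}.

Section Hhat.
Variable F : fieldType.
Local Notation H := (Hh F).

Definition ea (i : int) : H := << (inl i : Bas) >>.
Definition es (j : nat) : H :=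
  if j is n.+1 then << (inr (inl n) : Bas) >> else 0.
(* p_{rbar,k} for rbar in {1bar (b=false), 2bar (b=true)}; zero unless k in 3N *)
Definition pb (b : bool) (k : nat) : H :=
  if (k %% 3 == 0)%N && (0 < k)%N then << (inr (inr (b, (k %/ 3).-1)) : Bas) >>
  else 0.
(* p_{rbar,k} for an arbitrary residue rbar = r + 3Z, with p_{0bar} = -p_1 - p_2 *)
Definition ep (r : int) (k : nat) : H :=
  let c := (r %% 3)%Z in
  if c == 1 then pb false k else if c == 2 then pb true k
  else - pb false k - pb true k.
Definition ez (r : int) (j : nat) : H := ep (r + 1) j - ep (r - 1) j.

Definition rint (b : bool) : int := if b then 2 else 1.

Definition q (n d : nat) : F := n%:R / d%:R.

(* products of basis elements, (H1)-(H6) *)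
Definition mulAS (i : int) (j : nat) : H :=
  - (q 3 4 *: ea i) + q 3 8 *: (ea (i - j%:Z) + ea (i + j%:Z))
  + q 3 2 *: es j - ez i j.
Definition mulAP (i : int) (r : int) (k : nat) : H :=
  q 3 2 *: ep r k - ep (- (i + r)) k.
Definition mulSP (j : nat) (r : int) (k : nat) : H :=
  q 3 4 *: (ep r j + ep r k) - q 3 8 *: (ep r `|j%:Z - k%:Z|%N + ep r (j + k)).

Definition mulB (b c : Bas) : H :=
  match b, c with
  | inl i, inl i' =>
      q 1 2 *: (ea i + ea i') + es `|i - i'|%N + ez i `|i - i'|%N
  | inl i, inr (inl n) | inr (inl n), inl i => mulAS i n.+1
  | inl i, inr (inr (bb, m)) | inr (inr (bb, m)), inl i =>
      mulAP i (rint bb) (3 * m.+1)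
  | inr (inl n), inr (inl n') =>
      let j := n.+1 in let l := n'.+1 in
      q 3 4 *: (es j + es l) - q 3 8 *: (es `|j%:Z - l%:Z|%N + es (j + l))
  | inr (inl n), inr (inr (bb, m)) | inr (inr (bb, m)), inr (inl n) =>
      mulSP n.+1 (rint bb) (3 * m.+1)
  | inr (inr (bb, m)), inr (inr (bb', m')) =>
      let h := (3 * m.+1)%N in let k := (3 * m'.+1)%N in
      let rt := - (rint bb + rint bb') in
      q 1 4 *: (ez rt h + ez rt k)
      - q 1 8 *: (ez rt `|h%:Z - k%:Z|%N + ez rt (h + k))
  end.

Definition hmul (x y : H) : H :=
  \sum_(b <- msupp x) \sum_(c <- msupp y) (x@_b * y@_c) *: mulB b c.

Definition is_ideal (I : H -> Prop) : Prop :=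
  [/\ I 0,
      forall x y, I x -> I y -> I (x + y),
      forall (c : F) x, I x -> I (c *: x) &
      forall h x, I x -> I (hmul h x)].

Definition isP (b : Bas) : bool := if b is inr (inr _) then true else false.

Definition inJ (x : H) : Prop := forall b, b \in msupp x -> isP b.

Definition pidx (b : Bas) : nat := if b is inr (inr (_, m)) then m.+1 else 0%N.

Definition ptop (x : H) : nat := \max_(b <- msupp x) pidx b.
Definition plevel (x : H) : nat := (3 * ptop x)%N.

Definition jdeg (x : H) : rat :=
  (plevel x)%:R
  + (if x@_(inr (inr (false, (ptop x).-1)) : Bas) != 0 then 1%:R / 4%:R else 0)
  + (if x@_(inr (inr (true, (ptop x).-1)) : Bas) != 0 then 2%:R / 4%:R else 0).

End Hhat.

(* Main.v *)
Require Import Defs.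
From HB Require Import structures.
From mathcomp Require Import all_boot all_order all_algebra.
From mathcomp Require Import finmap monalg ring lra zify.
Import Order.TTheory GRing.Theory Num.Theory.
Local Open Scope ring_scope.

Section S.
Variable F : fieldType.
Local Notation H := (Hh F).
Definition P (b : bool) (m : nat) : Bas := inr (inr (b, m)).

Lemma hmul_ea (i : int) (y : H) :
  hmul (ea F i) y = \sum_(c <- msupp y) y@_c *: mulB F (inl i) c.
Proof.
rewrite /hmul /ea msuppU oner_eq0 big_seq_fset1.
by apply: eq_bigr => c _; rewrite mcoeffUU mul1r.
Qed.

Lemma pbE b m : pb F b (3 * m.+1) = << P b m >>.
Proof.
rewrite /pb. have -> : ((3 * m.+1) %% 3 == 0)%N && (0 < 3 * m.+1)%N by apply/andP; split; lia.
by have -> : ((3 * m.+1) %/ 3).-1 = m by lia.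
Qed.

Lemma coefU (c d : Bas) : (<< c >> : H)@_d = (c == d)%:R.
Proof. by rewrite mcoeffU. Qed.

Lemma sum_pick (y : H) (d : Bas) (a : F) :
  \sum_(c <- msupp y) y@_c * ((c == d)%:R * a) = y@_d * a.
Proof.
case: (boolP (d \in msupp y)) => hd.
  rewrite (bigD1_seq d) //= ?eqxx ?mul1r; last exact: fset_uniq.
  rewrite big1 ?addr0 // => c /negbTE ->; by rewrite mul0r mulr0.
rewrite (mcoeff_outdom hd) mul0r big_seq big1 // => c hc.
have -> : (c == d) = false by apply/eqP => e; rewrite -e hc in hd.
by rewrite mul0r mulr0.
Qed.

Lemma P_eq b m b' m' : (P b m == P b' m') = (b == b') && (m == m').
Proof.
apply/eqP/andP => [[-> ->]|[/eqP -> /eqP ->]] //.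
Qed.

Lemma isP_P c : isP c -> exists bb m0, c = P bb m0.
Proof. by case: c => [//|[//|[bb m0]]] _; exists bb, m0. Qed.

Lemma coef_a1_false c m : isP c ->
  (mulB F (inl 1) c)@_(P false m) =
  (c == P false m)%:R * (q F 3 2 - 1) + (c == P true m)%:R * 1.
Proof.
move=> /isP_P [bb [m0 ->]]; rewrite /= /mulAP /ep /= !P_eq /=.
case: bb => /=; rewrite ?pbE !(mcoeffB, mcoeffN, mcoeffD, mcoeffZ, coefU) !P_eq /=;
 case: (m0 == m) => /=; ring.
Qed.

Lemma coef_a1_true c m : isP c ->
  (mulB F (inl 1) c)@_(P true m) =
  (c == P false m)%:R * 0 + (c == P true m)%:R * (q F 3 2 + 1).
Proof.
move=> /isP_P [bb [m0 ->]]; rewrite /= /mulAP /ep /= !P_eq /=.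
case: bb => /=; rewrite ?pbE !(mcoeffB, mcoeffN, mcoeffD, mcoeffZ, coefU) !P_eq /=;
 case: (m0 == m) => /=; ring.
Qed.

Lemma coef_a2_false c m : isP c ->
  (mulB F (inl 2) c)@_(P false m) =
  (c == P false m)%:R * (q F 3 2 + 1) + (c == P true m)%:R * 0.
Proof.
move=> /isP_P [bb [m0 ->]]; rewrite /= /mulAP /ep /= !P_eq /=.
case: bb => /=; rewrite ?pbE !(mcoeffB, mcoeffN, mcoeffD, mcoeffZ, coefU) !P_eq /=;
 case: (m0 == m) => /=; ring.
Qed.

Lemma coef_a2_true c m : isP c ->
  (mulB F (inl 2) c)@_(P true m) =
  (c == P false m)%:R * 1 + (c == P true m)%:R * (q F 3 2 - 1).
Proof.
move=> /isP_P [bb [m0 ->]]; rewrite /= /mulAP /ep /= !P_eq /=.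
case: bb => /=; rewrite ?pbE !(mcoeffB, mcoeffN, mcoeffD, mcoeffZ, coefU) !P_eq /=;
 case: (m0 == m) => /=; ring.
Qed.

Lemma hmul_coef (i : int) (y : H) d (a b : F) : inJ y ->
  (forall c, isP c -> (mulB F (inl i) c)@_d =
     (c == P false (pidx d).-1)%:R * a + (c == P true (pidx d).-1)%:R * b) ->
  (hmul (ea F i) y)@_d = y@_(P false (pidx d).-1) * a + y@_(P true (pidx d).-1) * b.
Proof.
move=> hy hc; rewrite hmul_ea raddf_sum /=.
rewrite big_seq (eq_bigr (fun c => y@_c * ((c == P false (pidx d).-1)%:R * a)
   + y@_c * ((c == P true (pidx d).-1)%:R * b))); last first.
  by move=> c hc'; rewrite mcoeffZ hc ?mulrDr //; apply: hy.
by rewrite big_split /= -!big_seq !sum_pick.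
Qed.

End S.

Lemma max_attained (T : eqType) (s : seq T) (f : T -> nat) :
  s != [::] -> exists2 b, b \in s & f b = (\max_(b <- s) f b)%N.
Proof.
elim: s => [//|a s IH] _; rewrite big_cons.
case: (eqVneq s [::]) => [->|ns].
  by exists a; rewrite ?mem_seq1 // big_nil maxn0.
have [b bs fb] := IH ns.
case: (leqP (f a) (\max_(b <- s) f b)) => h.
  by exists b; [rewrite in_cons bs orbT | rewrite fb; lia].
by exists a; [rewrite mem_head | lia].
Qed.

Lemma ptop_ge (F : fieldType) (y : Hh F) b : b \in msupp y -> (pidx b <= ptop y)%N.
Proof. by move=> h; rewrite /ptop; apply: (leq_bigmax_seq b). Qed.

Lemma ptop_att (F : fieldType) (y : Hh F) : y != 0 ->
  exists2 b, b \in msupp y & pidx b = ptop y.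
Proof.
move=> y0; apply: max_attained.
apply: contra y0 => /eqP e; apply/eqP.
by rewrite (monalgE y) e big_nil.
Qed.

Lemma idWF (F : fieldType) (a b : F) : 2%:R != 0 :> F ->
  2%:R * ((a * (q F 3 2 - 1) + b * 1) * (q F 3 2 + 1) +
   (a * 0 + b * (q F 3 2 + 1)) * 0) +
  (- 2%:R * (a * (q F 3 2 - 1) + b * 1) +
   (-1 * (a * (q F 3 2 + 1) + b * 0) + a)) = 3%:R * b.
Proof. by move=> h; rewrite /q; field. Qed.

Lemma idWT (F : fieldType) (a b : F) : 2%:R != 0 :> F ->
  2%:R * ((a * (q F 3 2 - 1) + b * 1) * 1 + (a * 0 + b * (q F 3 2 + 1)) * (q F 3 2 - 1)) +
  (- 2%:R * (a * 0 + b * (q F 3 2 + 1)) +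
   (-1 * (a * 1 + b * (q F 3 2 - 1)) + b)) = 0.
Proof. by move=> h; rewrite /q; field. Qed.

Lemma jdeg_ge (F : fieldType) (y : Hh F) : (plevel y)%:R <= jdeg y.
Proof. rewrite /jdeg; do 2 case: ifP => _; lra. Qed.

Lemma jdeg_ge2 (F : fieldType) (y : Hh F) :
  y@_(P true (ptop y).-1) != 0 -> (plevel y)%:R + 2%:R/4%:R <= jdeg y.
Proof. rewrite /jdeg /P => ->; case: ifP => _; lra. Qed.

Lemma jdeg_eq (F : fieldType) (y : Hh F) :
  y@_(P false (ptop y).-1) != 0 -> y@_(P true (ptop y).-1) = 0 ->
  jdeg y = (plevel y)%:R + 1%:R/4%:R.
Proof. rewrite /jdeg /P => -> ->; rewrite eqxx /=; lra. Qed.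

Lemma sum_nat_pick (R : ringType) (f : nat -> R) m k :
  \sum_(0 <= j < k) f j * (j == m)%:R = if (m < k)%N then f m else 0.
Proof.
elim: k => [|k IH]; first by rewrite big_geq.
rewrite big_nat_recr //= IH.
case: (ltngtP m k) => h.
- have -> : (m < k.+1)%N by lia.
  by rewrite mulr0 addr0.
- have -> : (m < k.+1)%N = false by apply/negbTE; lia.
  by rewrite mulr0 addr0.
- by rewrite h ltnSn mulr1 add0r.
Qed.

Theorem lemma7p4 (F : fieldType)
  (hchar : (2 \notin [pchar F])%N && (3 \notin [pchar F])%N)
  (I : Hh F -> Prop) (hI : is_ideal I) (hIJ : forall y, I y -> inJ y)
  (x : Hh F) (hx : I x) (hx0 : x != 0)
  (hmin : forall y, I y -> y != 0 -> jdeg x <= jdeg y)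
  (k : nat) (hk : plevel x = (3 * k)%N) :
  exists beta : nat -> F,
    x = \sum_(1 <= j < k.+1) beta j *: @ep F 1 (3 * j)%N.
Proof.
have [h2 h3] : (2%:R != 0 :> F) /\ (3%:R != 0 :> F).
  by move: hchar; rewrite !inE /= => /andP [] /negbTE -> /negbTE ->.
move: hI; rewrite /is_ideal => -[I0 IA IZ IM].
set u := hmul (ea F 1) x.
set v := hmul (ea F 2) u.
set v' := hmul (ea F 2) x.
have Iu : I u by apply: IM.
have Iv : I v by apply: IM.
have Iv' : I v' by apply: IM.
have Jx := hIJ _ hx; have Ju := hIJ _ Iu.
have uF m : u@_(P false m) = x@_(P false m) * (q F 3 2 - 1) + x@_(P true m) * 1.
  by apply: hmul_coef => // c hc; apply: coef_a1_false.
have uT m : u@_(P true m) = x@_(P false m) * 0 + x@_(P true m) * (q F 3 2 + 1).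
  by apply: hmul_coef => // c hc; apply: coef_a1_true.
have vF m : v@_(P false m) = u@_(P false m) * (q F 3 2 + 1) + u@_(P true m) * 0.
  by apply: hmul_coef => // c hc; apply: coef_a2_false.
have vT m : v@_(P true m) = u@_(P false m) * 1 + u@_(P true m) * (q F 3 2 - 1).
  by apply: hmul_coef => // c hc; apply: coef_a2_true.
have v'F m : v'@_(P false m) = x@_(P false m) * (q F 3 2 + 1) + x@_(P true m) * 0.
  by apply: hmul_coef => // c hc; apply: coef_a2_false.
have v'T m : v'@_(P true m) = x@_(P false m) * 1 + x@_(P true m) * (q F 3 2 - 1).
  by apply: hmul_coef => // c hc; apply: coef_a2_true.
clearbody u v v'.
set w := 2%:R *: v + ((-2%:R) *: u + ((-1) *: v' + x)).
have Iw : I w by apply IA; [apply IZ | apply IA; [apply IZ|apply IA => //; apply IZ]].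
have Jw := hIJ _ Iw.
have wF m : w@_(P false m) = 3%:R * x@_(P true m).
  rewrite /w !(mcoeffD, mcoeffZ) vF uF uT v'F; move: (x@_(P false m)) (x@_(P true m)) => a b; exact: (idWF _ _ _ h2).
have wT m : w@_(P true m) = 0.
  rewrite /w !(mcoeffD, mcoeffZ) vT uF uT v'T; move: (x@_(P false m)) (x@_(P true m)) => a b; exact: (idWT _ _ _ h2).
clearbody w.
have X2z m : x@_(P true m) = 0.
  apply/eqP/negPn/negP => hne.
  have w0 : w != 0.
    apply/eqP => e; move: (wF m); rewrite e mcoeff0 => /esym/eqP.
    by rewrite mulf_eq0 (negbTE h3) (negbTE hne).
  have hj := hmin _ Iw w0.
  have [b bw pbw] := @ptop_att _ _ w0.
  have /isP_P [bb [mm eb]] := Jw _ bw; subst b.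
  case: bb bw pbw => bw pbw.
    by move: bw; rewrite -mcoeff_neq0 wT eqxx.
  have wne : w@_(P false mm) != 0 by rewrite mcoeff_neq0.
  have xne : x@_(P true mm) != 0.
    by move: wne; rewrite wF mulf_eq0 negb_or => /andP [].
  have hx2 : P true mm \in msupp x by rewrite -mcoeff_neq0.
  have le1 := @ptop_ge _ _ _ hx2; rewrite /= in le1 pbw.
  have jw : jdeg w = (plevel w)%:R + 1%:R/4%:R.
    by apply: jdeg_eq; rewrite -pbw /=; [exact: wne | exact: wT].
  rewrite jw /plevel -pbw in hj.
  case: (eqVneq (ptop x) mm.+1) => ex.
    have := @jdeg_ge2 _ x; rewrite ex /= => /(_ xne).
    rewrite /plevel ex; lra.
  have := @jdeg_ge _ x; rewrite /plevel.
  have : ((3 * mm.+1) + 3 <= 3 * ptop x)%N.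
    move: le1 ex; move: (ptop x) => t; clear; move=> le1 /eqP ex; lia.
  rewrite -(ler_nat rat) natrD => h1 h4.
  move: hj h1 h4; move: ((3 * mm.+1)%:R : rat) ((3 * ptop x)%:R : rat) (jdeg x) => A B C; lra.
have ptx : ptop x = k by move: hk; rewrite /plevel; lia.
exists (fun j => x@_(P false j.-1)).
apply/malgP => d; rewrite raddf_sum /= big_add1 /=.
under eq_bigr => j _ do rewrite mcoeffZ /ep /= pbE coefU.
case: (boolP (isP d)) => hd; last first.
  rewrite big1; last by move=> j _; case: d hd => [?|[?|?]] //= _; rewrite mulr0.
  by apply/eqP; rewrite mcoeff_eq0; apply: contra hd; apply: Jx.
have [bb [m ->]] := isP_P _ hd.
case: bb.
  rewrite X2z big1 // => j _; rewrite P_eq /= mulr0 //.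
under eq_bigr => j _ do rewrite P_eq /=.
rewrite sum_nat_pick.
case: ifP => // /negbT hm.
apply/eqP; rewrite mcoeff_eq0; apply/negP => h.
have := @ptop_ge _ _ _ h; rewrite /= ptx; lia.
Qed.
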